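(* Let $(X,\rho_X)$ be a symmetric rack, $(A,\phi,\psi,\eta)$ a constant-coefficient $(X,\rho_X)$-module, and $\alpha\in Z^2_{SR}((X,\rho_X);A)$. Then $\operatorname{Ker}(\Gamma)$ is isomorphic as a group to $$Z^1_{SR}((X,\rho_X);A)=\{\lambda:X\to A\mid \phi\lambda(x)-\lambda(x*y)+\psi\lambda(y)=0\text{ and }\eta\lambda(z)=\lambda(\rho_X(z))\text{ for all }x,y,z\in X\},$$ a group under pointwise addition.
   Context: A rack is a set $X$ with binary operation $*$ such that each $x\mapsto x*y$ is bijective (inverse $x\mapsto x*^{-1}y$) and $(x*y)*z=(x*z)*(y*z)$. A symmetric rack $(X,\rho_X)$ is a rack with $\rho_X:X\to X$ such that $\rho_X^2=\mathrm{id}$, $\rho_X(x*y)=\rho_X(x)*y$, $x*\rho_X(y)=x*^{-1}y$. $\operatorname{Aut}(X,\rho_X)$: bijections preserving $*$ and commuting with $\rho_X$. A constant-coefficient $(X,\rho_X)$-module $\mathcal F=(A,\phi,\psi,\eta)$: an abelian group $A$ with group automorphism $\phi$ and endomorphisms $\psi,\eta$ satisfying $\phi\psi=\psi\phi$, $\eta^2=\mathrm{id}$, $\eta\phi=\phi\eta$, $\eta\psi=\psi$, $\phi^2=\mathrm{id}$, $\psi=\phi\psi+\psi^2$, $\phi\psi\eta=-\psi$. $\operatorname{Aut}(A)$: group automorphisms of $A$ commuting with $\phi,\psi,\eta$. $Z^2_{SR}((X,\rho_X);A)$: maps $\alpha:X\times X\to A$ with, for all $x,y,z$: $-\phi\alpha(x,z)+\phi\alpha(x,y)+\alpha(x*y,z)-\alpha(x*z,y*z)-\psi\alpha(y,z)=0$,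 $\eta\alpha(x,y)=\alpha(\rho_X(x),y)$, $\phi\alpha(x*y,\rho_X(y))+\alpha(x,y)=0$. $E(\mathcal F,\alpha)$ is the symmetric rack on $X\times A$ with $(x,a)*(y,b)=(x*y,\phi(a)+\psi(b)+\alpha(x,y))$ and $\rho_{E(\mathcal F,\alpha)}(x,a)=(\rho_X(x),\eta(a))$. $\operatorname{Aut}_A(E(\mathcal F,\alpha),\rho_{E(\mathcal F,\alpha)})$ is the group of symmetric rack automorphisms $\xi$ of it of the form $\xi(x,s)=(\zeta(x),\lambda(x)+\theta(s))$ with $(\zeta,\theta)\in\operatorname{Aut}(X,\rho_X)\times\operatorname{Aut}(A)$ and $\lambda:X\to A$ a map; $\Gamma:\operatorname{Aut}_A(E(\mathcal F,\alpha),\rho_{E(\mathcal F,\alpha)})\to\operatorname{Aut}(X,\rho_X)\times\operatorname{Aut}(A)$ is the group homomorphism $\Gamma(\xi)=(\zeta,\theta)$. *)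

(* Defs.v *)
From mathcomp Require Import all_boot all_algebra.
Import GRing.Theory.
Set Implicit Arguments.
Unset Strict Implicit.
Unset Printing Implicit Defensive.
Local Open Scope ring_scope.

Definition is_rack (X : Type) (op : X -> X -> X) : Prop :=
  (forall y, bijective (fun x => op x y)) /\
  (forall x y z, op (op x y) z = op (op x z) (op y z)).

(* x *^{-1} y is the unique z with z * y = x; hence the axiom
   x * rho y = x *^{-1} y is written as (x * rho y) * y = x. *)
Definition is_symmetric_rack (X : Type) (op : X -> X -> X) (rho : X -> X) : Prop :=
  [/\ is_rack op,
      (forall x, rho (rho x) = x),
      (forall x y, rho (op x y) = op (rho x) y) &
      (forall x y, op (op x (rho y)) y = x)].

Definition is_zhom (A : zmodType) (f : A -> A) : Prop :=
  forall a b, f (a + b) = f a + f b.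

Definition is_cc_module (A : zmodType) (phi psi eta : A -> A) : Prop :=
  (is_zhom phi /\ bijective phi) /\ is_zhom psi /\ is_zhom eta /\
  (forall a, phi (psi a) = psi (phi a)) /\
  (forall a, eta (eta a) = a) /\
  (forall a, eta (phi a) = phi (eta a)) /\
  (forall a, eta (psi a) = psi a) /\
  (forall a, phi (phi a) = a) /\
  (forall a, psi a = phi (psi a) + psi (psi a)) /\
  (forall a, phi (psi (eta a)) = - psi a).

Definition in_Z2 (X : Type) (op : X -> X -> X) (rho : X -> X)
  (A : zmodType) (phi psi eta : A -> A) (alpha : X -> X -> A) : Prop :=
  [/\ (forall x y z, - phi (alpha x z) + phi (alpha x y) + alpha (op x y) z
                     - alpha (op x z) (op y z) - psi (alpha y z) = 0),
      (forall x y, eta (alpha x y) = alpha (rho x) y) &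
      (forall x y, phi (alpha (op x y) (rho y)) + alpha x y = 0)].

Definition in_Z1 (X : Type) (op : X -> X -> X) (rho : X -> X)
  (A : zmodType) (phi psi eta : A -> A) (lambda : X -> A) : Prop :=
  (forall x y, phi (lambda x) - lambda (op x y) + psi (lambda y) = 0) /\
  (forall z, eta (lambda z) = lambda (rho z)).

Definition E_op (X : Type) (op : X -> X -> X) (A : zmodType)
  (phi psi : A -> A) (alpha : X -> X -> A) (p q : X * A) : X * A :=
  (op p.1 q.1, phi p.2 + psi q.2 + alpha p.1 q.1).

Definition E_rho (X : Type) (rho : X -> X) (A : zmodType) (eta : A -> A)
  (p : X * A) : X * A := (rho p.1, eta p.2).

Definition is_symrack_aut (Y : Type) (op : Y -> Y -> Y) (rho : Y -> Y)
  (f : Y -> Y) : Prop :=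
  [/\ bijective f,
      (forall x y, f (op x y) = op (f x) (f y)) &
      (forall x, f (rho x) = rho (f x))].

Definition is_module_aut (A : zmodType) (phi psi eta theta : A -> A) : Prop :=
  [/\ is_zhom theta, bijective theta,
      (forall a, theta (phi a) = phi (theta a)),
      (forall a, theta (psi a) = psi (theta a)) &
      (forall a, theta (eta a) = eta (theta a))].

Definition Gamma_rel (X : Type) (A : zmodType) (xi : X * A -> X * A)
  (zeta : X -> X) (theta : A -> A) : Prop :=
  exists lambda : X -> A, forall x s, xi (x, s) = (zeta x, lambda x + theta s).

Definition in_Aut_A (X : Type) (op : X -> X -> X) (rho : X -> X)
  (A : zmodType) (phi psi eta : A -> A) (alpha : X -> X -> A)
  (xi : X * A -> X * A) : Prop :=
  is_symrack_aut (E_op op phi psi alpha) (E_rho rho eta) xi /\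
  exists (zeta : X -> X) (theta : A -> A),
    [/\ is_symrack_aut op rho zeta, is_module_aut phi psi eta theta &
        Gamma_rel xi zeta theta].

(** Membership in Ker(Gamma): Gamma(xi) = (id, id). *)
Definition in_Ker_Gamma (X : Type) (op : X -> X -> X) (rho : X -> X)
  (A : zmodType) (phi psi eta : A -> A) (alpha : X -> X -> A)
  (xi : X * A -> X * A) : Prop :=
  in_Aut_A op rho phi psi eta alpha xi /\ Gamma_rel xi id id.

(* Main.v *)
Require Import Defs.
From mathcomp Require Import all_boot all_algebra.
From Stdlib Require Import FunctionalExtensionality.
Import GRing.Theory.
Local Open Scope ring_scope.

Lemma zhom0 (A : zmodType) (f : A -> A) : is_zhom f -> f 0 = 0.
Proof. move=> H; have := H 0 0; rewrite addr0 => E. by apply: (@addrI _ (f 0)); rewrite addr0 -E. Qed.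

Lemma ker_form (X : Type) (op : X -> X -> X) (rho : X -> X) (A : zmodType) (phi psi eta : A -> A) (alpha : X -> X -> A) (xi : X * A -> X * A) :
  in_Ker_Gamma op rho phi psi eta alpha xi ->
  forall x s, xi (x, s) = (x, (xi (x, 0)).2 + s).
Proof.
case=> _ [l Hl] x s; rewrite !Hl /= addr0 //.
Qed.

Theorem proposition6p6 (X : Type) (op : X -> X -> X) (rho : X -> X)
  (A : zmodType) (phi psi eta : A -> A) (alpha : X -> X -> A) :
  is_symmetric_rack op rho ->
  is_cc_module phi psi eta ->
  in_Z2 op rho phi psi eta alpha ->
  exists f : (X * A -> X * A) -> (X -> A),
    [/\ (forall xi, in_Ker_Gamma op rho phi psi eta alpha xi ->
                    in_Z1 op rho phi psi eta (f xi)),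
        (forall xi xi', in_Ker_Gamma op rho phi psi eta alpha xi ->
                        in_Ker_Gamma op rho phi psi eta alpha xi' ->
                        f xi = f xi' -> xi = xi'),
        (forall lambda, in_Z1 op rho phi psi eta lambda ->
           exists xi, in_Ker_Gamma op rho phi psi eta alpha xi /\ f xi = lambda) &
        (forall xi xi', in_Ker_Gamma op rho phi psi eta alpha xi ->
                        in_Ker_Gamma op rho phi psi eta alpha xi' ->
                        f (xi \o xi') = (fun x => f xi x + f xi' x))].
Proof.
move=> _ [[Hphi _] [Hpsi [Heta _]]] _.
have phi0 := @zhom0 _ _ Hphi; have psi0 := @zhom0 _ _ Hpsi; have eta0 := @zhom0 _ _ Heta.
exists (fun xi x => (xi (x, 0)).2); split.
- move=> xi Hk; case: (Hk) => [[[_ Hop Hrho] _] [l F]].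
  have L : (fun x => (xi (x, 0)).2) = l.
    by apply: functional_extensionality => x; rewrite F /= addr0.
  rewrite L.
  split.
  + move=> x y; have := Hop (x, 0) (y, 0).
    rewrite /E_op /= !F /= phi0 psi0 !add0r !addr0 => [[]] /eqP.
    by move=> /eqP /addIr ->; rewrite opprD addrA addrN add0r addNr.
  + move=> z; have := Hrho (z, 0).
    by rewrite /E_rho /= !F /= eta0 !addr0 => [[]] <-.
- move=> xi xi' Hk Hk' E; apply: functional_extensionality => [[x s]].
  by rewrite (@ker_form _ _ _ _ _ _ _ _ _ Hk) (@ker_form _ _ _ _ _ _ _ _ _ Hk') (congr1 (fun g => g x) E).
- move=> l [Hl1 Hl2].
  have Hl x y : l (op x y) = phi (l x) + psi (l y).
    apply/eqP; rewrite eq_sym -subr_eq0 -(Hl1 x y).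
    by rewrite addrC addrA; apply/eqP; congr (_ + _); rewrite addrC.
  exists (fun p => (p.1, l p.1 + p.2)); split; last first.
    by apply: functional_extensionality => x /=; rewrite addr0.
  have G : Gamma_rel (fun p : X * A => (p.1, l p.1 + p.2)) id id by exists l.
  split => //; split.
  + split.
    * exists (fun p : X * A => (p.1, p.2 - l p.1)).
        by move=> [x s] /=; rewrite addrC addKr.
      by move=> [x s] /=; rewrite addrC subrK.
    * move=> [x a] [y b]; rewrite /E_op /= Hl !Hphi !Hpsi.
      by congr (_, _); rewrite addrA addrACA.
    * by move=> [x a]; rewrite /E_rho /= Heta Hl2.
  + exists id, id; split => //.
    * by split => //; exists id.
    * by split => //; exists id.
- move=> xi xi' Hk Hk'; apply: functional_extensionality => x /=.
  by rewrite (@ker_form _ _ _ _ _ _ _ _ _ Hk') /= addr0 (@ker_form _ _ _ _ _ _ _ _ _ Hk).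
Qed.
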